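(* Let $n\ge2$, $\phi\in\mathrm{End}(F_n)$, and let $(X,x_1)\to(R_n,* )$ be the finite based cover associated to a finite-index fully characteristic subgroup $K\le F_n$, with deck group $\Gamma=F_n/K$. If the endomorphism of $\Gamma$ induced by $\phi$ is not the identity, then the endomorphism of $H_1(X,\mathbb{Z})$ induced by $\phi$ is not the identity.
   Context: $F_n$ is the free group of rank $n\ge2$, identified with $\pi_1(R_n,* )$ where $R_n$ is the wedge of $n$ circles with wedge point $*$. A subgroup $K\le F_n$ is fully characteristic if $\phi(K)\subseteq K$ for all $\phi\in\mathrm{End}(F_n)$; then every $\phi\in\mathrm{End}(F_n)$ induces an endomorphism of $\Gamma=F_n/K$. The based cover associated to $K$ is the connected covering $p:(X,x_1)\to(R_n,* )$ with $p_*\pi_1(X,x_1)=K$, with deck group $\Gamma$. The endomorphism of $H_1(X,\mathbb{Z})\cong K^{ab}$ induced by $\phi$ is the abelianization of $\phi|_K:K\to K$. *)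

(* Defs.v *)
From mathcomp Require Import all_boot.
Set Implicit Arguments. Unset Strict Implicit. Unset Printing Implicit Defensive.

(* a letter (i, b) is x_i if b = true and x_i^{-1} if b = false *)
Definition letter (n : nat) := ('I_n * bool)%type.
Definition linv n (x : letter n) : letter n := (x.1, ~~ x.2).

Fixpoint reducedb n (w : seq (letter n)) : bool :=
  match w with
  | x :: ((y :: _) as w') => (y != linv x) && reducedb w'
  | _ => true
  end.

Definition push n (x : letter n) (w : seq (letter n)) : seq (letter n) :=
  match w with
  | y :: w' => if y == linv x then w' else x :: w
  | [::] => [:: x]
  end.

Definition nf n (w : seq (letter n)) : seq (letter n) := foldr (@push n) [::] w.

Lemma push_red n (x : letter n) w : reducedb w -> reducedb (push x w).
Proof.
case: w => [|y w'] //= H.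
case: ifP => Hy.
- by case: w' H => //= z w'' /andP[].
- by rewrite /= Hy H.
Qed.

Lemma nf_red n (w : seq (letter n)) : reducedb (nf w).
Proof. by elim: w => [|x w IH] //=; apply: push_red. Qed.

Record fg (n : nat) := FG { fgw : seq (letter n); fgP : reducedb fgw }.

Definition fg1 n : fg n := @FG n [::] isT.
Definition fgmul n (a b : fg n) : fg n := FG (nf_red (fgw a ++ fgw b)).
Definition fginv n (a : fg n) : fg n := FG (nf_red (rev (map (@linv n) (fgw a)))).

Definition is_endo n (phi : fg n -> fg n) : Prop :=
  forall a b, phi (fgmul a b) = fgmul (phi a) (phi b).

Definition is_subgroup n (K : fg n -> Prop) : Prop :=
  [/\ K (fg1 n), (forall a b, K a -> K b -> K (fgmul a b))
    & (forall a, K a -> K (fginv a))].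

Definition finite_index n (K : fg n -> Prop) : Prop :=
  exists (N : nat) (r : 'I_N -> fg n), forall g, exists i, K (fgmul (fginv (r i)) g).

Definition fully_characteristic n (K : fg n -> Prop) : Prop :=
  forall phi, is_endo phi -> forall k, K k -> K (phi k).

Inductive gen n (S : fg n -> Prop) : fg n -> Prop :=
  | gen1 : gen S (fg1 n)
  | genS x : S x -> gen S x
  | genM x y : gen S x -> gen S y -> gen S (fgmul x y)
  | genV x : gen S x -> gen S (fginv x).

Definition fgcomm n (a b : fg n) : fg n :=
  fgmul (fgmul (fginv a) (fginv b)) (fgmul a b).

Definition commutator_sub n (K : fg n -> Prop) : fg n -> Prop :=
  gen (fun c => exists a b, [/\ K a, K b & c = fgcomm a b]).

Definition induces_id_quot n (K : fg n -> Prop) (phi : fg n -> fg n) : Prop :=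
  forall g, K (fgmul (phi g) (fginv g)).

(* phi induces the identity on H_1(X,Z) = K^ab = K / [K,K] *)
Definition induces_id_H1 n (K : fg n -> Prop) (phi : fg n -> fg n) : Prop :=
  forall k, K k -> commutator_sub K (fgmul (phi k) (fginv k)).

(* Main.v *)
Require Import Defs.
From mathcomp Require Import all_boot.
From Stdlib Require Import ZArith Lia ClassicalEpsilon Classical.
Set Implicit Arguments. Unset Strict Implicit. Unset Printing Implicit Defensive.

Section G.
Variable n : nat.
Notation L := (letter n).
Notation G := (fg n).

Lemma linvK (x : L) : linv (linv x) = x.
Proof. by case: x => i b; rewrite /linv /= negbK. Qed.

Lemma nf_id (w : seq L) : reducedb w -> nf w = w.
Proof.
elim: w => [|x w IH] //= H.
have Hw : reducedb w by case: w H {IH} => //= y w /andP[].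
rewrite IH //; case: w H {IH Hw} => [|y w] //= /andP[Hy _].
by rewrite (negbTE Hy).
Qed.

Lemma push_cancel (x : L) r : reducedb r -> push x (push (linv x) r) = r.
Proof.
case: r => [|y r] /=.
  by rewrite eqxx.
move=> H. case: ifP => [/eqP Hy|Hy].
  rewrite linvK in Hy; subst y.
  case: r H => [|z r] //= /andP[Hz _]; by rewrite (negbTE Hz).
by rewrite /= eqxx.
Qed.

Lemma nf_catr (s t : seq L) : nf (s ++ t) = nf (s ++ nf t).
Proof.
have e : nf (nf t) = nf t by rewrite nf_id // nf_red.
by rewrite /nf !foldr_cat -/(nf t) -/(nf (nf t)) e.
Qed.

Lemma push_nf (x : L) (r t : seq L) : reducedb r -> push x (nf (r ++ t)) = nf (push x r ++ t).
Proof.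
case: r => [|y r] //= H. case: ifP => [/eqP Hy|Hy] //=.
by subst y; rewrite push_cancel // nf_red.
Qed.

Lemma nf_catl (s t : seq L) : nf (s ++ t) = nf (nf s ++ t).
Proof.
elim: s => [|x s IH] //=.
by rewrite IH push_nf // nf_red.
Qed.

Lemma nf_cancel (a b : seq L) x : nf (a ++ x :: linv x :: b) = nf (a ++ b).
Proof. by rewrite /nf !foldr_cat /= push_cancel // nf_red. Qed.

Definition invw (s : seq L) := rev (map (@linv n) s).

Lemma invw_cat s t : invw (s ++ t) = invw t ++ invw s.
Proof. by rewrite /invw map_cat rev_cat. Qed.

Lemma invwK s : invw (invw s) = s.
Proof. by rewrite /invw map_rev revK -map_comp map_id_in // => x _ /=; rewrite linvK. Qed.

Lemma nf_inv_r s : nf (s ++ invw s) = [::].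
Proof.
elim: s => [|x s IH] //=.
rewrite /invw /= rev_cons -cats1 catA -/(invw s).
by rewrite nf_catl IH /= eqxx.
Qed.

Lemma nf_inv_l s : nf (invw s ++ s) = [::].
Proof. by rewrite -{2}(invwK s) nf_inv_r. Qed.

Definition E (s : seq L) : G := FG (nf_red s).

Lemma fg_eq (a b : G) : fgw a = fgw b -> a = b.
Proof.
case: a b => [a Ha] [b Hb] /= e; subst b; congr FG; exact: eq_irrelevance.
Qed.

Lemma E_fgw (a : G) : E (fgw a) = a.
Proof. by apply: fg_eq; rewrite /= nf_id // fgP. Qed.

Lemma E_cat s t : E (s ++ t) = fgmul (E s) (E t).
Proof. by apply: fg_eq => /=; rewrite -nf_catl -nf_catr. Qed.

Lemma E_nil : E [::] = fg1 n.
Proof. exact: fg_eq. Qed.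

Lemma E_nf s : E (nf s) = E s.
Proof. by apply: fg_eq => /=; rewrite nf_id // nf_red. Qed.

Lemma fginvE (a : G) : fginv a = E (invw (fgw a)).
Proof. by []. Qed.

Lemma fgmulE (a b : G) : fgmul a b = E (fgw a ++ fgw b).
Proof. by []. Qed.

Lemma E_inv s : E (invw s) = fginv (E s).
Proof.
apply: fg_eq => /=; rewrite -/(invw (nf s)).
have h1 : nf (invw (nf s) ++ (nf s ++ invw s)) = nf (invw s).
  by rewrite catA nf_catl nf_inv_l.
have h2 : nf (invw (nf s) ++ (nf s ++ invw s)) = nf (invw (nf s)).
  by rewrite nf_catr -nf_catl nf_inv_r /= cats0.
by rewrite -h1 h2.
Qed.

Lemma mulgA (a b c : G) : fgmul a (fgmul b c) = fgmul (fgmul a b) c.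
Proof. by rewrite -[a]E_fgw -[b]E_fgw -[c]E_fgw -!E_cat catA. Qed.

Lemma mul1g (a : G) : fgmul (fg1 n) a = a.
Proof. by rewrite -E_nil -[a]E_fgw -E_cat. Qed.

Lemma mulg1 (a : G) : fgmul a (fg1 n) = a.
Proof. by rewrite -E_nil -[a]E_fgw -E_cat cats0. Qed.

Lemma mulVg (a : G) : fgmul (fginv a) a = fg1 n.
Proof. by rewrite fginvE -[X in fgmul _ X]E_fgw -E_cat -E_nf nf_inv_l E_nil. Qed.

Lemma mulgV (a : G) : fgmul a (fginv a) = fg1 n.
Proof. by rewrite fginvE -[X in fgmul X _]E_fgw -E_cat -E_nf nf_inv_r E_nil. Qed.

Lemma invgK (a : G) : fginv (fginv a) = a.
Proof. by rewrite -[a]E_fgw -!E_inv invwK. Qed.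

Lemma invMg (a b : G) : fginv (fgmul a b) = fgmul (fginv b) (fginv a).
Proof. by rewrite -[a]E_fgw -[b]E_fgw -E_cat -!E_inv -E_cat invw_cat. Qed.

Lemma inv1 : fginv (fg1 n) = fg1 n.
Proof. by rewrite -E_nil -E_inv. Qed.

Lemma mulKg (a b : G) : fgmul (fginv a) (fgmul a b) = b.
Proof. by rewrite mulgA mulVg mul1g. Qed.
Lemma mulKVg (a b : G) : fgmul a (fgmul (fginv a) b) = b.
Proof. by rewrite mulgA mulgV mul1g. Qed.
Lemma mulgK (a b : G) : fgmul (fgmul b a) (fginv a) = b.
Proof. by rewrite -mulgA mulgV mulg1. Qed.
Lemma mulgKV (a b : G) : fgmul (fgmul b (fginv a)) a = b.
Proof. by rewrite -mulgA mulVg mulg1. Qed.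

End G.


Definition bk (P : Prop) : bool := if excluded_middle_informative P then true else false.
Lemma bkP (P : Prop) : reflect P (bk P).
Proof. by rewrite /bk; case: excluded_middle_informative => h; constructor. Qed.
Lemma bk_eq (P Q : Prop) : (P <-> Q) -> bk P = bk Q.
Proof. move=> [h1 h2]; apply/idP/idP => /bkP h; apply/bkP; auto. Qed.

Definition b2z (b : bool) : Z := if b then 1%Z else 0%Z.

Section Chi.
Variable n : nat.
Notation L := (letter n).
Notation G := (fg n).
Variable K : G -> Prop.
Variable j : 'I_n.

Definition inK (v : G) (q : seq L) := bk (K (fgmul (fginv v) (E q))).

Definition contrib (v : G) (q : seq L) (x : L) : Z :=
  if x.1 == j then (if x.2 then b2z (inK v q) else (- b2z (inK v (rcons q x)))%Z) else 0%Z.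

Fixpoint chiA (v : G) (q : seq L) (s : seq L) : Z :=
  match s with
  | [::] => 0%Z
  | x :: s' => (contrib v q x + chiA v (rcons q x) s')%Z
  end.

Lemma chiA_inv (v v' : G) q q' s :
  (forall r, K (fgmul (fginv v) (E (q ++ r))) <-> K (fgmul (fginv v') (E (q' ++ r)))) ->
  chiA v q s = chiA v' q' s.
Proof.
elim: s q q' => [|x s IH] q q' H //=.
have Hx : forall r, K (fgmul (fginv v) (E (rcons q x ++ r))) <->
                    K (fgmul (fginv v') (E (rcons q' x ++ r))).
  by move=> r; rewrite !cat_rcons.
rewrite (IH _ _ Hx); congr (_ + _)%Z.
rewrite /contrib /inK.
have H0 := H [::]; rewrite !cats0 in H0; rewrite (bk_eq H0).
by rewrite -!cats1 (bk_eq (H [:: x])).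
Qed.

Lemma E_eq (s t : seq L) : nf s = nf t -> E s = E t.
Proof. by move=> e; apply: fg_eq. Qed.

Lemma chiA_cancel v q x s : chiA v q (x :: linv x :: s) = chiA v q s.
Proof.
have EE : forall r, E (rcons (rcons q x) (linv x) ++ r) = E (q ++ r).
  by move=> r; apply: E_eq; rewrite !cat_rcons nf_cancel.
rewrite /= Z.add_assoc (@chiA_inv v v (rcons (rcons q x) (linv x)) q s); last first.
  by move=> r; rewrite EE.
suff -> : (contrib v q x + contrib v (rcons q x) (linv x) = 0)%Z by lia.
rewrite /contrib /inK; case: x EE => i b EE /=.
case: eqP => _ //.
case: b EE => EE /=.
  by have := EE [::]; rewrite !cats0 => ->; lia.
lia.
Qed.

Lemma chiA_push v q x r : chiA v q (push x r) = chiA v q (x :: r).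
Proof.
case: r => [|y r] //=.
case: ifP => [/eqP ->|_] //.
by rewrite -(chiA_cancel v q x r).
Qed.

Lemma chiA_nf v q s : chiA v q (nf s) = chiA v q s.
Proof.
elim: s q => [|x s IH] q //=.
by rewrite chiA_push /= IH.
Qed.

Lemma chiA_cat v q s t : chiA v q (s ++ t) = (chiA v q s + chiA v (q ++ s) t)%Z.
Proof.
elim: s q => [|x s IH] q /=; first by rewrite cats0.
by rewrite IH cat_rcons; lia.
Qed.

Definition chi (v : G) (a : G) := chiA v [::] (fgw a).

Lemma chi_E v w : chi v (E w) = chiA v [::] w.
Proof. by rewrite /chi /= chiA_nf. Qed.

Lemma chi1 v : chi v (fg1 n) = 0%Z.
Proof. by []. Qed.

Lemma chi_cocycle v a b : chi v (fgmul a b) = (chi v a + chi (fgmul (fginv a) v) b)%Z.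
Proof.
rewrite fgmulE chi_E chiA_cat; congr (_ + _)%Z.
apply: chiA_inv => r /=.
by rewrite invMg invgK E_cat E_fgw -mulgA.
Qed.

Hypothesis Ksub : is_subgroup K.

Lemma chi_coset v v' a : K (fgmul (fginv v') v) -> chi v a = chi v' a.
Proof.
case: Ksub => K1 KM KV Hv.
apply: chiA_inv => r; split => h.
  by rewrite -(mulKVg v (E _)) mulgA; apply: KM.
rewrite -(mulKVg v' (E _)) mulgA; apply: KM => //.
by move: (KV _ Hv); rewrite invMg invgK.
Qed.

End Chi.


Section S3.
Variable n : nat.
Notation G := (fg n).
Variable K : G -> Prop.
Hypothesis Ksub : is_subgroup K.
Hypothesis Kfc : fully_characteristic K.

Definition cj (g x : G) := fgmul (fgmul (fginv g) x) g.

Lemma cj_endo g : is_endo (cj g).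
Proof. by move=> a b; rewrite /cj -!mulgA mulKVg. Qed.

Lemma Knorm g x : K x -> K (cj g x).
Proof. by move=> Kx; exact: (Kfc (cj_endo g) Kx). Qed.

Lemma KM a b : K a -> K b -> K (fgmul a b).
Proof. by case: Ksub => _ h _; exact: h. Qed.
Lemma KV a : K a -> K (fginv a).
Proof. by case: Ksub => _ _ h; exact: h. Qed.
Lemma K1 : K (fg1 n).
Proof. by case: Ksub. Qed.

Variable j : 'I_n.

Lemma chi_homK v a b : K a -> chi K j v (fgmul a b) = (chi K j v a + chi K j v b)%Z.
Proof.
move=> Ka; rewrite chi_cocycle (@chi_coset _ _ _ Ksub _ v) //.
have := Knorm v (KV Ka); by rewrite /cj mulgA.
Qed.

Lemma chi_invK v a : K a -> chi K j v (fginv a) = (- chi K j v a)%Z.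
Proof. move=> Ka; have := chi_homK v (fginv a) Ka; rewrite mulgV chi1; lia. Qed.

Lemma chi_comm x : commutator_sub K x -> K x /\ forall v, chi K j v x = 0%Z.
Proof.
elim => [|c [a [b [Ka Kb ->]]]|x1 y1 _ [Kx Hx] _ [Ky Hy]|x1 _ [Kx Hx]].
- by split; [exact: K1|move=> v; exact: chi1].
- have Kab : K (fgmul a b) by exact: KM.
  have Kiab : K (fgmul (fginv a) (fginv b)) by apply: KM; exact: KV.
  split; first exact: KM.
  move=> v; rewrite /fgcomm chi_homK // chi_homK ?chi_invK ?chi_homK //; try exact: KV.
  lia.
- split; first exact: KM.
  by move=> v; rewrite chi_homK // Hx Hy.
- split; first exact: KV.
  by move=> v; rewrite chi_invK // Hx.
Qed.

Lemma chi_conj v p x : K x ->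
  chi K j v (fgmul (fgmul p x) (fginv p)) = chi K j (fgmul (fginv p) v) x.
Proof.
move=> Kx.
rewrite chi_cocycle chi_cocycle.
rewrite (@chi_coset _ _ _ Ksub (fgmul (fginv (fgmul p x)) v) (fgmul (fginv p) v)); last first.
  have := Knorm (fgmul (fginv p) v) (KV Kx).
  rewrite /cj invMg !invMg invgK !mulgA.
  by [].
have := chi_cocycle K j v p (fginv p); rewrite mulgV chi1.
lia.
Qed.

Variable phi : G -> G.
Hypothesis Hphi : is_endo phi.

Lemma phi1 : phi (fg1 n) = fg1 n.
Proof.
have := Hphi (fg1 n) (fg1 n); rewrite mul1g => e.
have h := mulgK (phi (fg1 n)) (phi (fg1 n)).
by rewrite -e mulgV in h.
Qed.

Lemma phiV g : phi (fginv g) = fginv (phi g).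
Proof.
have := Hphi (fginv g) g; rewrite mulVg phi1 => e.
have h := mulgK (phi g) (phi (fginv g)).
by rewrite -e mul1g in h.
Qed.

Hypothesis H1 : induces_id_H1 K phi.

Lemma chi_phi v k : K k -> chi K j v (phi k) = chi K j v k.
Proof.
move=> Kk; have [Kd Hd] := chi_comm (H1 Kk).
by rewrite -{1}(mulgKV k (phi k)) chi_homK // Hd.
Qed.

Lemma key g k : K k ->
  chi K j (fgmul (fginv (phi g)) g) k = chi K j (fg1 n) k.
Proof.
move=> Kk.
have Kk1 : K (fgmul (fgmul g k) (fginv g)).
  by have := Knorm (fginv g) Kk; rewrite /cj invgK.
have := chi_phi g Kk1.
rewrite !Hphi phiV chi_conj ?chi_conj //; last by apply: Kfc.
by rewrite chi_phi // mulVg.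
Qed.

End S3.


Section S4.
Variable n : nat.
Notation G := (fg n).
Variable K : G -> Prop.
Hypothesis Ksub : is_subgroup K.
Hypothesis Kfc : fully_characteristic K.

Let KM' a b : K a -> K b -> K (fgmul a b). Proof. exact: (@KM n K Ksub a b). Qed.
Let KV' a : K a -> K (fginv a). Proof. exact: (@KV n K Ksub a). Qed.
Let K1' : K (fg1 n). Proof. exact: (@K1 n K Ksub). Qed.

Definition ap (j : 'I_n) : letter n := (j, true).
Definition pw j i := E (nseq i (ap j)).

Lemma pwD j a b : pw j (a + b) = fgmul (pw j a) (pw j b).
Proof. by rewrite /pw nseqD E_cat. Qed.

Lemma pw0 j : pw j 0 = fg1 n.
Proof. exact: E_nil. Qed.

Lemma coset u x y : K (fgmul (fginv u) x) -> K (fgmul (fginv u) y) ->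
  K (fgmul (fginv x) y).
Proof.
move=> h1 h2; have := KM' (KV' h1) h2.
by rewrite invMg invgK -mulgA mulKVg.
Qed.

Lemma pw_diff j m1 m2 u : m1 <= m2 -> K (fgmul (fginv u) (pw j m1)) ->
  K (fgmul (fginv u) (pw j m2)) -> K (pw j (m2 - m1)).
Proof.
move=> le h1 h2; have := coset h1 h2.
by rewrite -{1}(subnKC le) pwD mulKg.
Qed.

Lemma pw_exists (FI : finite_index K) j : exists o, 0 < o /\ K (pw j o).
Proof.
case: FI => N [r Hr].
pose f (m : 'I_N.+1) : 'I_N :=
  proj1_sig (constructive_indefinite_description _ (Hr (pw j m))).
have Hf m : K (fgmul (fginv (r (f m))) (pw j m)).
  exact: (proj2_sig (constructive_indefinite_description _ (Hr (pw j m)))).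
have : ~~ injectiveb f.
  apply/negP => /injectiveP inj; have := leq_card _ inj.
  by rewrite !card_ord ltnn.
case/injectivePn => m1 [m2 ne e].
case: (ltngtP m1 m2) => c.
- exists (m2 - m1); split; first by rewrite subn_gt0.
  apply: (@pw_diff j m1 m2 (r (f m1))); first exact: ltnW.
    exact: Hf.
  by rewrite e; apply: Hf.
- exists (m1 - m2); split; first by rewrite subn_gt0.
  apply: (@pw_diff j m2 m1 (r (f m2))); first exact: ltnW.
    exact: Hf.
  by rewrite -e; apply: Hf.
- by move: ne; rewrite (val_inj c) eqxx.
Qed.

Lemma pw_min j : (exists o, 0 < o /\ K (pw j o)) ->
  exists o, [/\ 0 < o, K (pw j o) & forall i, 0 < i -> i < o -> ~ K (pw j i)].
Proof.
move=> [o0 [h0 h1]].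
have ex : exists m, (fun m => (0 < m) && bk (K (pw j m))) m.
  by exists o0; rewrite h0; apply/bkP.
case: (ex_minnP ex) => o /andP[o_gt0 /bkP Ko] min.
exists o; split => // i i0 io Ki.
have := min i; rewrite i0 /=.
have -> : bk (K (pw j i)) by apply/bkP.
by move/(_ isT); rewrite leqNgt io.
Qed.

Lemma cnt_other j v q s : all (fun x : letter n => x.1 != j) s -> chiA K j v q s = 0%Z.
Proof.
elim: s q => [|x s IH] q //= /andP[h hs].
by rewrite /contrib (negbTE h) IH.
Qed.

Lemma cnt_pow j v m J :
  (forall i, m <= i -> i < m + J -> ~ K (fgmul (fginv v) (pw j i))) ->
  chiA K j v (nseq m (ap j)) (nseq J (ap j)) = 0%Z.
Proof.
elim: J m => [|J IH] m H //=.
rewrite /contrib /= eqxx.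
have -> : inK K v (nseq m (ap j)) = false.
  apply/bkP; apply: (H m (leqnn m)); by rewrite addnS ltnS leq_addr.
have -> : rcons (nseq m (ap j)) (ap j) = nseq m.+1 (ap j).
  by rewrite -cats1 -addn1 nseqD.
rewrite IH //= => i hi1 hi2; apply: H; first exact: ltnW.
by rewrite addnS -addSn.
Qed.

Lemma cnt_one j J : 0 < J -> (forall i, 0 < i -> i < J -> ~ K (pw j i)) ->
  chiA K j (fg1 n) [::] (nseq J (ap j)) = 1%Z.
Proof.
case: J => // J _ H /=.
rewrite /contrib /= eqxx.
have -> : inK K (fg1 n) [::] = true.
  by apply/bkP; rewrite E_nil inv1 mul1g.
rewrite (@cnt_pow j (fg1 n) 1 J) //.
move=> i hi1 hi2; rewrite inv1 mul1g; exact: H.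
Qed.

Lemma dist j j' J L t : j != j' -> 0 < J ->
  (forall i, 0 < i -> i < J -> ~ K (pw j i)) ->
  (forall i, i < J -> ~ K (fgmul (fginv t) (pw j i))) ->
  chi K j t (E (nseq J (ap j) ++ nseq L (j', false))) <>
  chi K j (fg1 n) (E (nseq J (ap j) ++ nseq L (j', false))).
Proof.
move=> ne J0 Hm Ht.
rewrite !chi_E !chiA_cat !(@cnt_other j _ _ (nseq L (j', false))); last first.
- by rewrite all_nseq /=; apply/orP; right; rewrite eq_sym.
- by rewrite all_nseq /=; apply/orP; right; rewrite eq_sym.
rewrite cnt_one //.
rewrite (@cnt_pow j t 0 J) //.
by move=> i _ hi; apply: Ht.
Qed.

Lemma nseq_inv j l : invw (nseq l (ap j)) = nseq l (j, false).
Proof. by rewrite /invw map_nseq rev_nseq. Qed.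

Lemma comb (n2 : 1 < n) (FI : finite_index K) t : ~ K t ->
  exists j k, K k /\ chi K j t k <> chi K j (fg1 n) k.
Proof.
move=> nt.
pose j0 : 'I_n := Ordinal (ltnW n2). pose j1 : 'I_n := Ordinal n2.
have ne01 : j0 != j1 by [].
have [o0 [o0p Ko0 m0]] := pw_min (pw_exists FI j0).
have [o1 [o1p Ko1 m1]] := pw_min (pw_exists FI j1).
case: (classic (exists i, i < o0 /\ K (fgmul (fginv t) (pw j0 i)))) => [[i [io Ki]]|nA]; last first.
  exists j0, (E (nseq o0 (ap j0) ++ nseq 0 (j1, false))); split.
    by rewrite cats0.
  apply: dist => // i hi Ki; apply: nA; by exists i.
case: (classic (exists l, l < o1 /\ K (fgmul (fginv t) (pw j1 l)))) => [[l [lo Kl]]|nB]; last first.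
  exists j1, (E (nseq o1 (ap j1) ++ nseq 0 (j0, false))); split.
    by rewrite cats0.
  apply: dist => //.
  move=> l hl Kl; apply: nB; by exists l.
have i0 : 0 < i.
  rewrite lt0n; apply/negP => /eqP ei; subst i.
  rewrite pw0 mulg1 in Ki.
  by apply: nt; rewrite -(invgK t); apply: KV'.
exists j0, (E (nseq i (ap j0) ++ nseq l (j1, false))); split.
  rewrite E_cat -nseq_inv E_inv -/(pw j0 i) -/(pw j1 l).
  have h := KV' (coset Ki Kl).
  rewrite invMg invgK in h.
  have := Knorm Kfc (fginv (pw j0 i)) h.
  by rewrite /cj invgK mulgA mulgK.
apply: dist => //.
  move=> i' h1 h2; apply: m0 => //; exact: ltn_trans io.
move=> i' hi' Ki'.
have := pw_diff (ltnW hi') Ki' Ki.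
apply: m0; first by rewrite subn_gt0.
exact: leq_ltn_trans (leq_subr _ _) io.
Qed.

End S4.


Theorem corollary1p3 (n : nat) (K : fg n -> Prop) (phi : fg n -> fg n) :
  2 <= n ->
  is_subgroup K -> finite_index K -> fully_characteristic K ->
  is_endo phi ->
  ~ induces_id_quot K phi ->
  ~ induces_id_H1 K phi.
Proof.
move=> n2 Ksub FI Kfc Hphi nQ H1.
have [g ng] : exists g, ~ K (fgmul (phi g) (fginv g)).
  by apply: not_all_ex_not; exact: nQ.
have nt : ~ K (fgmul (fginv (phi g)) g).
  move=> Kt; apply: ng.
  have h := KV Ksub Kt; rewrite invMg invgK in h.
  have := Knorm Kfc (fginv g) h.
  by rewrite /cj invgK mulKVg.
have [j [k [Kk hk]]] := comb Ksub Kfc n2 FI nt.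
by apply: hk; apply: key.
Qed.
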